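(* Let $H$ be a graph and $k\ge2$, and suppose $G=\mathsf{TJ}_k(H)$ is triangle-free. Then every vertex of $G$ has degree at most $k$; in particular $\Delta(G)\le k$.
   Context: All graphs are finite, simple, undirected; $\Delta(G)$ is the maximum degree. A $k$-clique of a graph $H$ is a set of $k$ pairwise adjacent vertices. For a graph $H$ and integer $k\ge1$, the Token Jumping graph $\mathsf{TJ}_k(H)$ has as vertices the $k$-cliques of $H$, and two $k$-cliques $A,B$ are adjacent iff $|A\cap B|=k-1$. *)

(* Defs.v *)
From mathcomp Require Import all_boot.
Set Implicit Arguments. Unset Strict Implicit. Unset Printing Implicit Defensive.

Definition simple_graph (T : finType) (e : rel T) : Prop :=
  symmetric e /\ irreflexive e.

Definition is_kclique (T : finType) (e : rel T) (k : nat) (A : {set T}) : bool :=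
  (#|A| == k) && [forall x in A, forall y in A, (x != y) ==> e x y].

Definition TJ_vertices (T : finType) (e : rel T) (k : nat) : {set {set T}} :=
  [set A | is_kclique e k A].

Definition TJ_adj (T : finType) (e : rel T) (k : nat) (A B : {set T}) : bool :=
  [&& A \in TJ_vertices e k, B \in TJ_vertices e k & #|A :&: B| == k.-1].

Definition TJ_nbhd (T : finType) (e : rel T) (k : nat) (A : {set T}) : {set {set T}} :=
  [set B | TJ_adj e k A B].

Definition TJ_degree (T : finType) (e : rel T) (k : nat) (A : {set T}) : nat :=
  #|TJ_nbhd e k A|.

Definition TJ_triangle_free (T : finType) (e : rel T) (k : nat) : Prop :=
  forall A B C : {set T},
    ~ [&& TJ_adj e k A B, TJ_adj e k B C & TJ_adj e k A C].

(* Maximum degree of TJ_k(H) (0 if it has no vertices). *)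
Definition TJ_maxdeg (T : finType) (e : rel T) (k : nat) : nat :=
  \max_(A in TJ_vertices e k) TJ_degree e k A.

(* Main.v *)
Require Import Defs.
From mathcomp Require Import all_boot zify.

Lemma deg_bound (T : finType) (e : rel T) (k : nat) (A : {set T}) :
  2 <= k -> TJ_triangle_free e k -> A \in TJ_vertices e k -> TJ_degree e k A <= k.
Proof.
move=> k2 tf Av.
have cA : #|A| = k by move: Av; rewrite inE => /andP[/eqP].
have cardv : forall B, B \in TJ_vertices e k -> #|B| = k.
  by move=> B; rewrite inE => /andP[/eqP].
set N := TJ_nbhd e k A.
have inj : {in N &, injective (fun B => A :\: B)}.
  move=> B C; rewrite !inE => /and3P[_ Bv /eqP iB] /and3P[_ Cv /eqP iC] eqD.
  have eI : A :&: B = A :&: C.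
    apply/setP=> x; move/setP: eqD => /(_ x); rewrite !inE.
    by case: (x \in A); case: (x \in B); case: (x \in C).
  have sub : A :&: B \subset B :&: C.
    apply/subsetP=> x xAB; move: (xAB); rewrite eI !inE => /andP[_ ->].
    by move: xAB; rewrite !inE => /andP[_ ->].
  have ge : k.-1 <= #|B :&: C| by rewrite -iB; apply: subset_leq_card.
  case: (boolP (#|B :&: C| == k.-1)) => h.
    exfalso; apply: (tf A B C).
    by rewrite /TJ_adj Av Bv Cv iB iC h !eqxx.
  have gek : #|B| <= #|B :&: C|.
    rewrite (cardv B Bv); move: ge h; move: (#|B :&: C|) => n; clear -k2.
    move=> ge /eqP h; lia.
  have E1 : B :&: C = B by apply/eqP; rewrite eqEcard subsetIl gek.
  have E2 : B :&: C = C.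
    apply/eqP; rewrite eqEcard subsetIr (cardv C Cv) -(cardv B Bv).
    by rewrite gek.
  by rewrite -E1 E2.
have img : (fun B => A :\: B) @: N \subset [set [set x] | x in A].
  apply/subsetP=> S /imsetP[B BN ->].
  move: BN; rewrite inE => /and3P[_ Bv /eqP iB].
  have c1 : #|A :\: B| == 1.
    rewrite cardsD iB cA; apply/eqP; clear -k2; lia.
  case/cards1P: c1 => x Ex; rewrite Ex; apply/imsetP; exists x => //.
  have : x \in A :\: B by rewrite Ex set11.
  by rewrite inE => /andP[_ ->].
rewrite /TJ_degree -/N -(card_in_imset inj).
apply: leq_trans (subset_leq_card img) _.
by rewrite card_imset ?cA //; apply: set1_inj.
Qed.

Theorem lemma4p5 (T : finType) (e : rel T) (k : nat) :
  simple_graph e -> 2 <= k -> TJ_triangle_free e k ->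
  (forall A : {set T}, A \in TJ_vertices e k -> TJ_degree e k A <= k) /\
  TJ_maxdeg e k <= k.
Proof.
move=> _ k2 tf.
have H := @deg_bound T e k _ k2 tf.
split=> //; rewrite /TJ_maxdeg.
by apply/bigmax_leqP => A Av; apply: H.
Qed.
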